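(* Let $G=(V,E)$ be a connected undirected graph with labeled nodes $1,\dots,n_l$ ($1\le n_l<n$), edge costs $d_e>0$, and let $p$ be an unlabeled node. For every $\lambda\ge0$, the oriented flow subgraph $G_p(\lambda)$ is a directed acyclic graph.
   Context: Orient each edge arbitrarily; let $A$ be the $n\times m$ signed incidence matrix ($A_{ie}=+1$, $A_{je}=-1$ for $e$ oriented from $i$ to $j$) and $A_u$ its rows indexed by unlabeled nodes $n_l+1,\dots,n$. Let $\vec b_p\in\mathbb R^{n-n_l}$ be zero except $-1$ at the entry of $p$. For $\lambda\ge0$ let $\vec x$ be the unique minimizer of $\frac12\sum_{e=1}^m d_e(x_e^2+\lambda|x_e|)$ subject to $A_u\vec x=\vec b_p$. The flow subgraph $G_p(\lambda)$ consists of all edges $e$ with $x_e\neq0$ and the nodes incident to them; it is oriented by keeping the chosen orientation of $e$ if $x_e>0$ and reversing it if $x_e<0$ (so that the flow is positive on every edge of $G_p(\lambda)$). *)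

(* Defs.v *)
From HB Require Import structures.
From mathcomp Require Import all_boot all_order all_algebra.
Set Implicit Arguments. Unset Strict Implicit. Unset Printing Implicit Defensive.
Import Order.TTheory GRing.Theory Num.Theory.
Local Open Scope ring_scope.

(* A graph on nodes 'I_n with m edges; edge e joins src e and dst e and is
   oriented (arbitrarily) from src e to dst e.  Nodes are 0-indexed: the
   labeled nodes 1..n_l of the paper are the nodes i with i < n_l. *)

Definition adj (n m : nat) (src dst : 'I_m -> 'I_n) : rel 'I_n :=
  fun i j => [exists e, ((src e == i) && (dst e == j)) || ((src e == j) && (dst e == i))].

Definition simple_graph (n m : nat) (src dst : 'I_m -> 'I_n) : Prop :=
  (forall e, src e != dst e) /\
  (forall e f, ((src e == src f) && (dst e == dst f)) || ((src e == dst f) && (dst e == src f)) -> e = f).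

Definition connected_graph (n m : nat) (src dst : 'I_m -> 'I_n) : Prop :=
  forall i j, connect (adj src dst) i j.

Definition incidence (R : pzRingType) (n m : nat) (src dst : 'I_m -> 'I_n) : 'M[R]_(n, m) :=
  \matrix_(i, e) ((src e == i)%:R - (dst e == i)%:R).

(* A_u x = b_p : rows of unlabeled nodes (i >= n_l); b_p = -1 at p, 0 elsewhere *)
Definition feasible (R : pzRingType) (n m nl : nat) (src dst : 'I_m -> 'I_n) (p : 'I_n)
  (x : 'cV[R]_m) : Prop :=
  forall i : 'I_n, (nl <= i)%N ->
    (incidence R src dst *m x) i 0 = (if i == p then -1 else 0).

Definition objective (R : numFieldType) (m : nat) (d : 'I_m -> R) (lam : R) (x : 'cV[R]_m) : R :=
  2^-1 * \sum_(e < m) d e * (x e 0 ^+ 2 + lam * `|x e 0|).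

Definition is_minimizer (R : numFieldType) (n m nl : nat) (src dst : 'I_m -> 'I_n)
  (p : 'I_n) (d : 'I_m -> R) (lam : R) (x : 'cV[R]_m) : Prop :=
  feasible nl src dst p x /\
  forall y : 'cV[R]_m, feasible nl src dst p y -> objective d lam x <= objective d lam y.

(* directed edge relation of the oriented flow subgraph G_p(lambda):
   edges with x_e <> 0, oriented along the flow *)
Definition flow_arc (R : numDomainType) (n m : nat) (src dst : 'I_m -> 'I_n)
  (x : 'cV[R]_m) : rel 'I_n :=
  fun i j => [exists e,
    ((0 < x e 0) && (src e == i) && (dst e == j)) ||
    ((x e 0 < 0) && (dst e == i) && (src e == j))].

Definition dag (T : finType) (r : rel T) : Prop :=
  forall i j, r i j -> ~~ connect r j i.

(* Main.v *)
Require Import Defs.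
From HB Require Import structures.
From mathcomp Require Import all_boot all_order all_algebra.
From mathcomp Require Import ring lra.
Import Order.TTheory GRing.Theory Num.Theory.
Local Open Scope ring_scope.

Lemma mul_delta_entry (R : realFieldType) n m (A : 'M[R]_(n, m)) (e : 'I_m) (i : 'I_n) :
  (A *m delta_mx e (0 : 'I_1)) i 0 = A i e.
Proof.
rewrite mxE (bigD1 e) //= mxE !eqxx mulr1 big1 ?addr0 // => f /negbTE nf.
by rewrite mxE nf mulr0.
Qed.

Lemma walk_circ (R : realFieldType) n m (src dst : 'I_m -> 'I_n) (x : 'cV[R]_m) u s :
  path (flow_arc src dst x) u s ->
  exists c : 'cV[R]_m,
   (forall i, (incidence R src dst *m c) i 0 = (i == u)%:R - (i == last u s)%:R) /\
   (forall e, c e 0 = 0 \/ 0 < c e 0 * x e 0) /\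
   (s != [::] -> exists e, 0 < c e 0 * x e 0).
Proof.
elim: s u => [|v s IH] u /=.
  move=> _; exists 0; split; first by move=> i; rewrite mulmx0 mxE subrr.
  by split=> // e; left; rewrite mxE.
case/andP => /existsP [e He] /IH [c [Hb [Hs _]]].
have [sg [Hsx Hcol]] : exists sg : R, 0 < sg * x e 0 /\
   forall i, sg * incidence R src dst i e = (i == u)%:R - (i == v)%:R.
  case/orP: He => /andP [/andP [Hx /eqP Hu] /eqP Hv].
    exists 1; split; first by rewrite mul1r.
    by move=> i; rewrite mul1r mxE -Hu -Hv ![i == _]eq_sym.
  exists (-1); split; first by rewrite mulN1r oppr_gt0.
  by move=> i; rewrite mulN1r mxE -Hu -Hv ![i == _]eq_sym opprB.
have key : 0 < (c + sg *: delta_mx e 0) e 0 * x e 0.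
  rewrite !mxE !eqxx mulr1 mulrDl.
  by case: (Hs e) => [->|h]; [rewrite mul0r add0r | apply: addr_gt0].
exists (c + sg *: delta_mx e 0); split; last split.
- move=> i; rewrite mulmxDr -scalemxAr.
  have -> : forall M N : 'cV[R]_n, (M + sg *: N) i 0 = M i 0 + sg * N i 0.
    by move=> M N; rewrite !mxE.
  rewrite mul_delta_entry Hb Hcol.
  ring.
- move=> f; case: (eqVneq f e) => [->|nfe]; first by right.
  by rewrite !mxE (negbTE nfe) /= mulr0 addr0; apply: Hs.
- by move=> _; exists e.
Qed.

Lemma edge_dec (R : realFieldType) (lam a c : R) : 0 <= lam -> 0 < c * a -> `|c| <= `|a| ->
  (a - c) ^+ 2 + lam * `|a - c| < a ^+ 2 + lam * `|a|.
Proof.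
move=> hl hca.
have [ha|ha|ha] := ltgtP a 0.
- have hc : c < 0 by case: (ltP c 0) => // hc; exfalso; nra.
  rewrite (ltr0_norm ha) (ltr0_norm hc) => hle.
  rewrite (ler0_norm (x := a - c)); last by lra.
  nra.
- have hc : 0 < c by case: (ltP 0 c) => // hc; exfalso; nra.
  rewrite (gtr0_norm ha) (gtr0_norm hc) => hle.
  rewrite (ger0_norm (x := a - c)); last by lra.
  nra.
- by move: hca; rewrite ha mulr0 ltxx.
Qed.

Theorem proposition3 (R : realFieldType) (n m nl : nat)
  (src dst : 'I_m -> 'I_n) (d : 'I_m -> R) (p : 'I_n) (lam : R) (x : 'cV[R]_m) :
  (1 <= nl)%N -> (nl < n)%N ->
  simple_graph src dst -> connected_graph src dst ->
  (forall e, 0 < d e) ->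
  (nl <= p)%N ->
  0 <= lam ->
  is_minimizer nl src dst p d lam x ->
  dag (flow_arc src dst x).
Proof.
move=> _ _ _ _ hd _ hlam [hfeas hmin] i j hij; apply/negP => /connectP [s hs hlast].
have hp : path (flow_arc src dst x) i (j :: s) by rewrite /= hij hs.
have [c [hb [hsg hne]]] := walk_circ R _ _ _ _ _ _ _ hp.
have hb0 : forall k, (incidence R src dst *m c) k 0 = 0.
  by move=> k; rewrite hb /= -hlast subrr.
have [e0 he0] := hne isT.
pose q := fun e => `|c e 0| / `|x e 0|.
pose S := \sum_e q e.
have hS : 0 <= S by apply: sumr_ge0 => e _; rewrite /q divr_ge0.
pose t := (1 + S)^-1.
have ht : 0 < t by rewrite /t invr_gt0; lra.
have hbound : forall e, `|t * c e 0| <= `|x e 0|.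
  move=> e; case: (hsg e) => [->|hcx]; first by rewrite mulr0 normr0.
  have hx0 : x e 0 != 0 by apply: contraTneq hcx => ->; rewrite mulr0 ltxx.
  have hqS : q e <= S.
    rewrite /S (bigD1 e) //= lerDl; apply: sumr_ge0 => f _; rewrite /q divr_ge0 //.
  rewrite normrM (gtr0_norm ht).
  have -> : `|c e 0| = q e * `|x e 0| by rewrite /q divfK // normr_eq0.
  rewrite mulrA; apply: ler_piMl => //.
  by rewrite /t mulrC ler_pdivrMr ?mul1r; lra.
pose y := x - t *: c.
have hfy : feasible nl src dst p y.
  move=> k hk; rewrite /y mulmxBr -scalemxAr.
  have -> : forall M N : 'cV[R]_n, (M - t *: N) k 0 = M k 0 - t * N k 0.
    by move=> M N; rewrite !mxE.
  rewrite hb0 mulr0 subr0.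
  by rewrite hfeas.
have hye : forall e, y e 0 = x e 0 - t * c e 0 by move=> e; rewrite !mxE.
have hle : forall e, (y e 0) ^+ 2 + lam * `|y e 0| <= (x e 0) ^+ 2 + lam * `|x e 0|.
  move=> e; rewrite hye; case: (hsg e) => [->|hcx]; first by rewrite mulr0 subr0.
  apply: ltW; apply: (edge_dec R); [done | by rewrite -mulrA mulr_gt0 | exact: hbound].
clearbody y t S q.
have := hmin y hfy; apply/negP; rewrite -ltNge /objective.
have h2 : 0 < 2^-1 :> R by rewrite invr_gt0 ltr0n.
rewrite ltr_pM2l //.
rewrite (bigD1 e0) // [X in _ < X](bigD1 e0) //.
apply: ltr_leD.
  rewrite ltr_pM2l // hye; apply: (edge_dec R); [done | by rewrite -mulrA mulr_gt0 | exact: hbound].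
by apply: ler_sum => e _; rewrite ler_pM2l.
Qed.
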